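(* Let $\mathsf{u},\mathsf{v}\in V$ be consistently oriented spacelike vectors, let $p\in E$ and $\mathsf{w}\in V$, and suppose the crooked planes $\mathcal{C}(\mathsf{u},p)$ and $\mathcal{C}(\mathsf{v},p+\mathsf{w})$ are disjoint. Then $\mathcal{C}(\mathsf{v},p+\mathsf{w})\subset\mathcal{H}(-\mathsf{u},p)$.
   Context: $V=\mathbb{R}^3$ with Lorentzian inner product $x\cdot y=x_1y_1+x_2y_2-x_3y_3$ and standard orientation; $E$ is the affine space with translation space $V$. Null: $x\cdot x=0$; spacelike: $x\cdot x>0$; future-pointing: third coordinate positive. For spacelike $\mathsf{v}$, $\mathsf{v}^-,\mathsf{v}^+$ are the two future-pointing null vectors of Euclidean length $1$ in $\mathsf{v}^\perp$, labelled so that $(\mathsf{v}^-,\mathsf{v}^+,\mathsf{v})$ is positively oriented. For null $x$, $\mathcal{P}(x)$ is the set of spacelike $w\in x^\perp$ with $w^+$ a positive multiple of $x$. The crooked plane $\mathcal{C}(\mathsf{v},p)=(p+\mathcal{P}(\mathsf{v}^+))\cup(p+\mathcal{P}(\mathsf{v}^-))\cup(p+\{x:\mathsf{v}\cdot x=0,\ x\cdot x\le0\})$. The crooked half-space $\mathcal{H}(\mathsf{v},p)$ is the set of $q\in E$ with $(q-p)\cdot\mathsf{v}^+\le0$ if $(q-p)\cdot\mathsf{v}\ge0$, and $(q-p)\cdot\mathsf{v}^-\ge0$ if $(q-p)\cdot\mathsf{v}\le0$ (both when $(q-p)\cdot\mathsf{v}=0$). Spacelike vectors $\mathsf{v}_1,\dots,\mathsf{v}_n$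 are consistently oriented if for all $i\ne j$: $\mathsf{v}_i\cdot\mathsf{v}_j<0$, $\mathsf{v}_i\cdot\mathsf{v}_j^+\le0$ and $\mathsf{v}_i\cdot\mathsf{v}_j^-\le0$. *)

(* Defs.v *)
From Stdlib Require Import Reals ClassicalEpsilon.
Open Scope R_scope.

(* V = R^3 as triples; E (affine space with translation space V) is modelled
   by R^3 as well, with p + w the translate. *)
Record vec := Vec { c1 : R; c2 : R; c3 : R }.

Definition vzero : vec := Vec 0 0 0.
Definition vadd (x y : vec) : vec := Vec (c1 x + c1 y) (c2 x + c2 y) (c3 x + c3 y).
Definition vsub (x y : vec) : vec := Vec (c1 x - c1 y) (c2 x - c2 y) (c3 x - c3 y).
Definition vopp (x : vec) : vec := Vec (- c1 x) (- c2 x) (- c3 x).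
Definition vscale (k : R) (x : vec) : vec := Vec (k * c1 x) (k * c2 x) (k * c3 x).

Definition ldot (x y : vec) : R := c1 x * c1 y + c2 x * c2 y - c3 x * c3 y.

Definition null (x : vec) : Prop := ldot x x = 0.
Definition spacelike (x : vec) : Prop := ldot x x > 0.
Definition future (x : vec) : Prop := c3 x > 0.

Definition enorm (x : vec) : R := sqrt (c1 x ^ 2 + c2 x ^ 2 + c3 x ^ 2).

(* standard orientation: (a,b,c) positively oriented iff det[a b c] > 0 *)
Definition det3 (a b c : vec) : R :=
  c1 a * (c2 b * c3 c - c3 b * c2 c)
  - c2 a * (c1 b * c3 c - c3 b * c1 c)
  + c3 a * (c1 b * c2 c - c2 b * c1 c).

Definition null_frame (v ym yp : vec) : Prop :=
  null ym /\ null yp /\ future ym /\ future yp /\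
  enorm ym = 1 /\ enorm yp = 1 /\
  ldot v ym = 0 /\ ldot v yp = 0 /\
  det3 ym yp v > 0.

(* the (unique, for spacelike v) pair (v^-, v^+), chosen by description *)
Definition vpm (v : vec) : vec * vec :=
  epsilon (inhabits (vzero, vzero)) (fun pr => null_frame v (fst pr) (snd pr)).
Definition vminus (v : vec) : vec := fst (vpm v).
Definition vplus (v : vec) : vec := snd (vpm v).

Definition Pset (x w : vec) : Prop :=
  spacelike w /\ ldot w x = 0 /\ exists k, k > 0 /\ vplus w = vscale k x.

Definition crooked_plane (v p q : vec) : Prop :=
  Pset (vplus v) (vsub q p) \/ Pset (vminus v) (vsub q p) \/
  (ldot v (vsub q p) = 0 /\ ldot (vsub q p) (vsub q p) <= 0).

Definition crooked_halfspace (v p q : vec) : Prop :=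
  (ldot (vsub q p) v >= 0 -> ldot (vsub q p) (vplus v) <= 0) /\
  (ldot (vsub q p) v <= 0 -> ldot (vsub q p) (vminus v) >= 0).

Definition consistently_oriented2 (u v : vec) : Prop :=
  spacelike u /\ spacelike v /\
  ldot u v < 0 /\
  ldot u (vplus v) <= 0 /\ ldot u (vminus v) <= 0 /\
  ldot v (vplus u) <= 0 /\ ldot v (vminus u) <= 0.

(* Main.v *)
Require Import Defs.
From Stdlib Require Import Reals Lra Lia Psatz ClassicalEpsilon.
Import Defs.
Open Scope R_scope.

Lemma vec_ext (x y : vec) : c1 x = c1 y -> c2 x = c2 y -> c3 x = c3 y -> x = y.
Proof. destruct x, y; simpl; intros; subst; reflexivity. Qed.

Lemma ldot_sym x y : ldot x y = ldot y x.
Proof. unfold ldot; ring. Qed.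
Lemma ldot_add x y z : ldot (vadd x y) z = ldot x z + ldot y z.
Proof. unfold ldot, vadd; simpl; ring. Qed.
Lemma ldot_sub x y z : ldot (vsub x y) z = ldot x z - ldot y z.
Proof. unfold ldot, vsub; simpl; ring. Qed.
Lemma ldot_scale k x z : ldot (vscale k x) z = k * ldot x z.
Proof. unfold ldot, vscale; simpl; ring. Qed.
Lemma ldot_opp x z : ldot (vopp x) z = - ldot x z.
Proof. unfold ldot, vopp; simpl; ring. Qed.

Definition combo (a b g : R) (m n u : vec) : vec :=
  vadd (vadd (vscale a m) (vscale b n)) (vscale g u).

Definition fr (u m n : vec) : Prop := spacelike u /\ null_frame u m n.

Lemma fr_facts u m n : fr u m n ->
  ldot u u > 0 /\ ldot m m = 0 /\ ldot n n = 0 /\ ldot u m = 0 /\ ldot u n = 0 /\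
  det3 m n u > 0 /\ future m /\ future n.
Proof.
  intros [Hs (H1&H2&H3&H4&_&_&H7&H8&H9)]; unfold null, spacelike in *; tauto.
Qed.
Lemma FN x y : null x -> null y -> future x -> future y -> ldot x y <= 0.
Proof.
  destruct x as [x1 x2 x3], y as [y1 y2 y3]; unfold null, future, ldot; simpl; intros Hx Hy H3 H4.
  assert (HC : (x1*y1+x2*y2)^2 <= (x3*y3)^2).
  { assert (E: (x3*y3)^2 = (x3*x3)*(y3*y3)) by ring.
    assert (Ex: x3*x3 = x1*x1+x2*x2) by lra.
    assert (Ey: y3*y3 = y1*y1+y2*y2) by lra.
    rewrite E, Ex, Ey.
    assert (0 <= (x1*y2-x2*y1)^2) by apply pow2_ge_0. nra. }
  assert (Hp : 0 < x3*y3) by nra.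
  destruct (Rle_dec (x1*y1+x2*y2) (x3*y3)) as [Hl|Hl]; [lra|].
  apply Rnot_le_gt in Hl.
  assert ((x3*y3)^2 < (x1*y1+x2*y2)^2) by (simpl; nra).
  lra.
Qed.

Lemma L_orth m n v d : det3 m n v <> 0 -> ldot d m = 0 -> ldot d n = 0 -> ldot d v = 0 -> d = vzero.
Proof.
  destruct m as [m1 m2 m3], n as [n1 n2 n3], v as [v1 v2 v3], d as [d1 d2 d3];
  unfold det3, ldot, vzero; simpl; intros HD H1 H2 H3.
  set (D := m1 * (n2 * v3 - n3 * v2) - m2 * (n1 * v3 - n3 * v1) + m3 * (n1 * v2 - n2 * v1)) in *.
  assert (E1 : D * d1 = (d1*m1+d2*m2-d3*m3) * (n2*v3-n3*v2) + (d1*n1+d2*n2-d3*n3) * (v2*m3-v3*m2) + (d1*v1+d2*v2-d3*v3)*(m2*n3-m3*n2)) by (unfold D; ring).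
  assert (E2 : D * d2 = (d1*m1+d2*m2-d3*m3) * (n3*v1-n1*v3) + (d1*n1+d2*n2-d3*n3) * (v3*m1-v1*m3) + (d1*v1+d2*v2-d3*v3)*(m3*n1-m1*n3)) by (unfold D; ring).
  assert (E3 : D * (-d3) = (d1*m1+d2*m2-d3*m3) * (n1*v2-n2*v1) + (d1*n1+d2*n2-d3*n3) * (v1*m2-v2*m1) + (d1*v1+d2*v2-d3*v3)*(m1*n2-m2*n1)) by (unfold D; ring).
  rewrite H1, H2, H3 in E1, E2, E3.
  f_equal.
  - apply (Rmult_eq_reg_l D); [lra|auto].
  - apply (Rmult_eq_reg_l D); [lra|auto].
  - apply (Rmult_eq_reg_l D); [lra|auto].
Qed.

Lemma fr_k u m n : fr u m n -> ldot m n < 0.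
Proof.
  intros F. destruct (fr_facts _ _ _ F) as (Hu&Hm&Hn&Hum&Hun&HD&Fm&Fn).
  assert (Hle : ldot m n <= 0) by (apply FN; auto).
  destruct (Req_dec (ldot m n) 0) as [E|E]; [|lra].
  assert (m = vzero) as Z.
  { apply (L_orth m n u); try lra; auto. rewrite ldot_sym; auto. }
  unfold future in Fm; rewrite Z in Fm; simpl in Fm; lra.
Qed.

Lemma fr_dec u m n z : fr u m n ->
  z = combo (ldot z n / ldot m n) (ldot z m / ldot m n) (ldot z u / ldot u u) m n u.
Proof.
  intros F. destruct (fr_facts _ _ _ F) as (Hu&Hm&Hn&Hum&Hun&HD&Fm&Fn).
  pose proof (fr_k _ _ _ F) as Hk.
  set (c := combo _ _ _ m n u).
  assert (vsub z c = vzero) as Z.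
  { apply (L_orth m n u); try lra; unfold c, combo;
    rewrite ?ldot_sub, ?ldot_add, ?ldot_scale;
    rewrite ?(ldot_sym n m), ?(ldot_sym m u), ?(ldot_sym n u);
    rewrite ?Hm, ?Hn, ?Hum, ?Hun; field; lra. }
  clearbody c.
  apply vec_ext; [apply (f_equal c1) in Z|apply (f_equal c2) in Z|apply (f_equal c3) in Z];
  unfold vsub in Z; simpl in Z; lra.
Qed.

Lemma fr_ldot u m n z y : fr u m n ->
  ldot z y = (ldot z n * ldot y m + ldot z m * ldot y n) / ldot m n + ldot z u * ldot y u / ldot u u.
Proof.
  intros F. destruct (fr_facts _ _ _ F) as (Hu&Hm&Hn&Hum&Hun&HD&Fm&Fn).
  pose proof (fr_k _ _ _ F) as Hk.
  rewrite (fr_dec u m n z F) at 1. unfold combo; rewrite !ldot_add, !ldot_scale.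
  rewrite (ldot_sym m y), (ldot_sym n y), (ldot_sym u y). field; lra.
Qed.

Lemma fr_detn u m n z : fr u m n -> det3 z n u * ldot m n = ldot z n * det3 m n u.
Proof.
  intros F. pose proof (fr_k _ _ _ F) as Hk.
  rewrite (fr_dec u m n z F) at 1. unfold combo.
  set (a := ldot z n / ldot m n). set (b := ldot z m / ldot m n). set (g := ldot z u / ldot u u).
  assert (E : det3 (vadd (vadd (vscale a m) (vscale b n)) (vscale g u)) n u = a * det3 m n u)
    by (unfold det3, vadd, vscale; simpl; ring).
  rewrite E. unfold a. field. lra.
Qed.

Lemma fr_detm u m n z : fr u m n -> det3 m z u * ldot m n = ldot z m * det3 m n u.
Proof.
  intros F. pose proof (fr_k _ _ _ F) as Hk.
  rewrite (fr_dec u m n z F) at 1. unfold combo.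
  set (a := ldot z n / ldot m n). set (b := ldot z m / ldot m n). set (g := ldot z u / ldot u u).
  assert (E : det3 m (vadd (vadd (vscale a m) (vscale b n)) (vscale g u)) u = b * det3 m n u)
    by (unfold det3, vadd, vscale; simpl; ring).
  rewrite E. unfold b. field. lra.
Qed.

Lemma perp_null x m n y : fr x m n -> null y -> future y -> ldot y x = 0 ->
  (exists c, c > 0 /\ y = vscale c m) \/ (exists c, c > 0 /\ y = vscale c n).
Proof.
  intros F Hy Fy Hyx. destruct (fr_facts _ _ _ F) as (Hu&Hm&Hn&Hum&Hun&HD&Fm&Fn).
  pose proof (fr_k _ _ _ F) as Hk.
  pose proof (fr_ldot x m n y y F) as Eyy.
  unfold null in Hy. rewrite Hy, Hyx in Eyy.
  assert (P : ldot y n * ldot y m = 0).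
  { assert (E2 : (ldot y n * ldot y m + ldot y m * ldot y n) / ldot m n = 0) by lra.
    assert (E3 : ldot y n * ldot y m + ldot y m * ldot y n = 0).
    { apply (Rmult_eq_reg_r (/ ldot m n)). rewrite Rmult_0_l. exact E2. apply Rinv_neq_0_compat; lra. }
    lra. }
  pose proof (fr_dec x m n y F) as D. rewrite Hyx in D.
  unfold future in *.
  apply Rmult_integral in P. destruct P as [P|P].
  - right. exists (ldot y m / ldot m n). rewrite P in D.
    assert (E : y = vscale (ldot y m / ldot m n) n).
    { rewrite D at 1. unfold combo, vadd, vscale; simpl. apply vec_ext; simpl; field; lra. }
    split; auto.
    rewrite E in Fy; simpl in Fy.
    destruct (Rle_dec (ldot y m / ldot m n) 0); [|lra].
    exfalso. assert (ldot y m / ldot m n * c3 n <= 0) by nra. lra.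
  - left. exists (ldot y n / ldot m n). rewrite P in D.
    assert (E : y = vscale (ldot y n / ldot m n) m).
    { rewrite D at 1. unfold combo, vadd, vscale; simpl. apply vec_ext; simpl; field; lra. }
    split; auto.
    rewrite E in Fy; simpl in Fy.
    destruct (Rle_dec (ldot y n / ldot m n) 0); [|lra].
    exfalso. assert (ldot y n / ldot m n * c3 m <= 0) by nra. lra.
Qed.

Lemma FN_fr u m n : fr u m n -> forall z, null z -> future z -> ldot z n <= 0 /\ ldot z m <= 0.
Proof.
  intros F z Hz Fz. destruct (fr_facts _ _ _ F) as (Hu&Hm&Hn&Hum&Hun&HD&Fm&Fn).
  split; apply FN; auto.
Qed.

Lemma Kn u m n x m' n' : fr u m n -> fr x m' n' -> ldot x n = 0 ->
  (ldot x u > 0 -> exists c, c > 0 /\ n' = vscale c n) /\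
  (ldot x u < 0 -> exists c, c > 0 /\ m' = vscale c n).
Proof.
  intros F F' Hxn.
  destruct (fr_facts _ _ _ F) as (Hu&Hm&Hn&Hum&Hun&HD&Fm&Fn).
  destruct (fr_facts _ _ _ F') as (Hx&Hm'&Hn'&Hxm'&Hxn'&HD'&Fm'&Fn').
  pose proof (fr_k _ _ _ F) as Hk.
  pose proof (fr_dec u m n x F) as Dx.
  set (b := ldot x m / ldot m n) in Dx. set (g := ldot x u / ldot u u) in Dx.
  rewrite Hxn in Dx. replace (0 / ldot m n) with 0 in Dx by (field; lra). clearbody b.
  assert (Hg : ldot x u = g * ldot u u) by (unfold g; field; lra). clearbody g.
  assert (Edet : forall A, det3 A n x = g * det3 A n u).
  { intro A. rewrite Dx. unfold combo, det3, vadd, vscale; simpl; ring. }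
  assert (Edet2 : forall A, det3 n A x = g * det3 n A u).
  { intro A. rewrite Dx. unfold combo, det3, vadd, vscale; simpl; ring. }
  destruct (perp_null x m' n' n F' Hn Fn) as [[c [Hc E]]|[c [Hc E]]].
  { rewrite ldot_sym; auto. }
  -
    assert (H1 : det3 n n' x = c * det3 m' n' x) by (rewrite E; unfold det3, vscale; simpl; ring).
    rewrite Edet2 in H1.
    pose proof (fr_detn u m n n' F) as H2.
    destruct (FN_fr u m n F n' Hn' Fn') as [H3 _].
    assert (H4 : det3 n n' u = - det3 n' n u) by (unfold det3; ring).
    assert (H5 : det3 n' n u >= 0).
    { destruct (Rlt_dec (det3 n' n u) 0); [|lra]. exfalso. nra. }
    assert (g < 0) by nra.
    split; intro Hs; [exfalso; nra|].
    exists (/ c). split; [apply Rinv_0_lt_compat; lra|].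
    rewrite E. apply vec_ext; unfold vscale; simpl; field; lra.
  -
    assert (H1 : det3 m' n x = c * det3 m' n' x) by (rewrite E; unfold det3, vscale; simpl; ring).
    rewrite Edet in H1.
    pose proof (fr_detn u m n m' F) as H2.
    destruct (FN_fr u m n F m' Hm' Fm') as [H3 _].
    assert (H5 : det3 m' n u >= 0).
    { destruct (Rlt_dec (det3 m' n u) 0); [|lra]. exfalso. nra. }
    assert (g > 0) by nra.
    split; intro Hs; [|exfalso; nra].
    exists (/ c). split; [apply Rinv_0_lt_compat; lra|].
    rewrite E. apply vec_ext; unfold vscale; simpl; field; lra.
Qed.

Lemma Km u m n x m' n' : fr u m n -> fr x m' n' -> ldot x m = 0 ->
  (ldot x u < 0 -> exists c, c > 0 /\ n' = vscale c m) /\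
  (ldot x u > 0 -> exists c, c > 0 /\ m' = vscale c m).
Proof.
  intros F F' Hxm.
  destruct (fr_facts _ _ _ F) as (Hu&Hm&Hn&Hum&Hun&HD&Fm&Fn).
  destruct (fr_facts _ _ _ F') as (Hx&Hm'&Hn'&Hxm'&Hxn'&HD'&Fm'&Fn').
  pose proof (fr_k _ _ _ F) as Hk.
  pose proof (fr_dec u m n x F) as Dx.
  set (a := ldot x n / ldot m n) in Dx. set (g := ldot x u / ldot u u) in Dx.
  rewrite Hxm in Dx. replace (0 / ldot m n) with 0 in Dx by (field; lra). clearbody a.
  assert (Hg : ldot x u = g * ldot u u) by (unfold g; field; lra). clearbody g.
  assert (Edet : forall A, det3 A m x = g * det3 A m u).
  { intro A. rewrite Dx. unfold combo, det3, vadd, vscale; simpl; ring. }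
  assert (Edet2 : forall A, det3 m A x = g * det3 m A u).
  { intro A. rewrite Dx. unfold combo, det3, vadd, vscale; simpl; ring. }
  destruct (perp_null x m' n' m F' Hm Fm) as [[c [Hc E]]|[c [Hc E]]].
  { rewrite ldot_sym; auto. }
  -
    assert (H1 : det3 m n' x = c * det3 m' n' x) by (rewrite E; unfold det3, vscale; simpl; ring).
    rewrite Edet2 in H1.
    pose proof (fr_detm u m n n' F) as H2.
    destruct (FN_fr u m n F n' Hn' Fn') as [_ H3].
    assert (H5 : det3 m n' u >= 0).
    { destruct (Rlt_dec (det3 m n' u) 0); [|lra]. exfalso. nra. }
    assert (g > 0) by nra.
    split; intro Hs; [exfalso; nra|].
    exists (/ c). split; [apply Rinv_0_lt_compat; lra|].
    rewrite E. apply vec_ext; unfold vscale; simpl; field; lra.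
  -
    assert (H1 : det3 m' m x = c * det3 m' n' x) by (rewrite E; unfold det3, vscale; simpl; ring).
    rewrite Edet in H1.
    pose proof (fr_detm u m n m' F) as H2.
    destruct (FN_fr u m n F m' Hm' Fm') as [_ H3].
    assert (H4 : det3 m' m u = - det3 m m' u) by (unfold det3; ring).
    assert (H5 : det3 m m' u >= 0).
    { destruct (Rlt_dec (det3 m m' u) 0); [|lra]. exfalso. nra. }
    assert (g < 0) by nra.
    split; intro Hs; [|exfalso; nra].
    exists (/ c). split; [apply Rinv_0_lt_compat; lra|].
    rewrite E. apply vec_ext; unfold vscale; simpl; field; lra.
Qed.

Lemma frame_ex v : spacelike v -> exists m n, null_frame v m n.
Proof.
  destruct v as [a b c]. unfold spacelike, ldot; simpl. intro Hsp.
  set (r2 := a*a+b*b).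
  assert (Hr : r2 > 0) by (unfold r2; nra).
  set (s := sqrt (r2 - c*c)).
  assert (Hs2 : s * s = r2 - c*c) by (unfold s; apply sqrt_sqrt; unfold r2; lra).
  assert (Hs : s > 0) by (unfold s; apply sqrt_lt_R0; unfold r2; lra).
  set (h := sqrt (/2)).
  assert (Hh2 : h * h = /2) by (unfold h; apply sqrt_sqrt; lra).
  assert (Hh : h > 0) by (unfold h; apply sqrt_lt_R0; lra).
  clearbody s h.
  assert (Q : forall e : R, ((a*c + e*b*s)/r2) * ((a*c + e*b*s)/r2) + ((b*c - e*a*s)/r2) * ((b*c - e*a*s)/r2) = 1 \/ e*e <> 1).
  { intro e. destruct (Req_dec (e*e) 1) as [He|He]; [left|right; auto].
    assert (E : (a*c + e*b*s)*(a*c + e*b*s) + (b*c - e*a*s)*(b*c - e*a*s) = r2 * (c*c + (e*e)*(s*s)))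
      by (unfold r2; ring).
    rewrite He, Hs2 in E. replace (r2 * (c*c + 1*(r2 - c*c))) with (r2*r2) in E by ring.
    replace (((a*c + e*b*s)/r2) * ((a*c + e*b*s)/r2) + ((b*c - e*a*s)/r2) * ((b*c - e*a*s)/r2))
      with (((a*c + e*b*s)*(a*c + e*b*s) + (b*c - e*a*s)*(b*c - e*a*s)) / (r2*r2)) by (field; lra).
    rewrite E. field. lra. }
  exists (Vec (h*((a*c - b*s)/r2)) (h*((b*c + a*s)/r2)) h).
  exists (Vec (h*((a*c + b*s)/r2)) (h*((b*c - a*s)/r2)) h).
  destruct (Q 1) as [Q1|Q1]; [|lra]. destruct (Q (-1)) as [Q2|Q2]; [|lra].
  replace (a*c + 1*b*s) with (a*c+b*s) in Q1 by ring.
  replace (b*c - 1*a*s) with (b*c-a*s) in Q1 by ring.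
  replace (a*c + -1*b*s) with (a*c-b*s) in Q2 by ring.
  replace (b*c - -1*a*s) with (b*c+a*s) in Q2 by ring.
  unfold null_frame, null, future, enorm, ldot, det3; simpl.
  assert (N1 : sqrt ((h * ((a * c - b * s) / r2)) ^ 2 + (h * ((b * c + a * s) / r2)) ^ 2 + h ^ 2) = 1).
  { replace ((h * ((a * c - b * s) / r2)) ^ 2 + (h * ((b * c + a * s) / r2)) ^ 2 + h ^ 2)
      with ((h*h) * ((a * c - b * s) / r2 * ((a * c - b * s) / r2) + (b * c + a * s) / r2 * ((b * c + a * s) / r2)) + h*h) by ring.
    rewrite Q2, Hh2. replace (/2 * 1 + /2) with 1 by field. apply sqrt_1. }
  assert (N2 : sqrt ((h * ((a * c + b * s) / r2)) ^ 2 + (h * ((b * c - a * s) / r2)) ^ 2 + h ^ 2) = 1).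
  { replace ((h * ((a * c + b * s) / r2)) ^ 2 + (h * ((b * c - a * s) / r2)) ^ 2 + h ^ 2)
      with ((h*h) * ((a * c + b * s) / r2 * ((a * c + b * s) / r2) + (b * c - a * s) / r2 * ((b * c - a * s) / r2)) + h*h) by ring.
    rewrite Q1, Hh2. replace (/2 * 1 + /2) with 1 by field. apply sqrt_1. }
  repeat split.
  - replace (h * ((a * c - b * s) / r2) * (h * ((a * c - b * s) / r2)) + h * ((b * c + a * s) / r2) * (h * ((b * c + a * s) / r2)) - h * h)
      with ((h*h) * ((a * c - b * s) / r2 * ((a * c - b * s) / r2) + (b * c + a * s) / r2 * ((b * c + a * s) / r2) - 1)) by ring.
    rewrite Q2; ring.
  - replace (h * ((a * c + b * s) / r2) * (h * ((a * c + b * s) / r2)) + h * ((b * c - a * s) / r2) * (h * ((b * c - a * s) / r2)) - h * h)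
      with ((h*h) * ((a * c + b * s) / r2 * ((a * c + b * s) / r2) + (b * c - a * s) / r2 * ((b * c - a * s) / r2) - 1)) by ring.
    rewrite Q1; ring.
  - lra.
  - lra.
  - exact N1.
  - exact N2.
  - unfold r2; field. fold r2; lra.
  - unfold r2; field. fold r2; lra.
  - assert (E : h * ((a * c - b * s) / r2) * (h * ((b * c - a * s) / r2) * c - h * b) -
       h * ((b * c + a * s) / r2) * (h * ((a * c + b * s) / r2) * c - h * a) +
       h * (h * ((a * c + b * s) / r2) * b - h * ((b * c - a * s) / r2) * a) = (h*h) * (2*s/r2) * (r2 - c*c)).
    { unfold r2; field. fold r2; lra. }
    rewrite E. apply Rmult_lt_0_compat; [apply Rmult_lt_0_compat|]; try nra.
    apply Rdiv_lt_0_compat; lra.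
Qed.

Lemma vpm_fr v : spacelike v -> fr v (vminus v) (vplus v).
Proof.
  intro Hs. split; auto. unfold vminus, vplus, vpm.
  apply (epsilon_spec (inhabits (vzero, vzero)) (fun pr => null_frame v (fst pr) (snd pr))).
  destruct (frame_ex v Hs) as [m [n H]]. exists (m, n). exact H.
Qed.

Definition mn a b := (a + b - Rabs (a - b)) / 2.
Definition mx a b := (a + b + Rabs (a - b)) / 2.
Lemma mn_eq a b : mn a b = Rmin a b.
Proof. unfold mn, Rmin, Rabs; destruct (Rle_dec a b), (Rcase_abs (a - b)); lra. Qed.
Lemma mx_eq a b : mx a b = Rmax a b.
Proof. unfold mx, Rmax, Rabs; destruct (Rle_dec a b), (Rcase_abs (a - b)); lra. Qed.

Definition Fr a b g := mx (mx (mn (-a) b) (mn (-a) g)) (mn b (-g)).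

Lemma Fr_R a b g : Fr a b g = Rmax (Rmax (Rmin (-a) b) (Rmin (-a) g)) (Rmin b (-g)).
Proof. unfold Fr; rewrite !mx_eq, !mn_eq; reflexivity. Qed.

Ltac mm := unfold Rmax, Rmin in *; repeat destruct Rle_dec; lra.

Lemma Fr_zero a b g : Fr a b g = 0 ->
  (g = 0 /\ a * b >= 0) \/ (g > 0 /\ a = 0) \/ (g < 0 /\ b = 0).
Proof.
  rewrite Fr_R. intro H.
  destruct (Rtotal_order g 0) as [Hg|[Hg|Hg]].
  - right; right. split; auto. mm.
  - left. split; auto. subst g.
    destruct (Rtotal_order a 0) as [|[|]], (Rtotal_order b 0) as [|[|]]; subst; try nra; exfalso; mm.
  - right; left. split; auto. mm.
Qed.

Lemma Fr_neg a b g : Fr a b g < 0 -> (g <= 0 -> b < 0) /\ (g >= 0 -> a > 0).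
Proof. rewrite Fr_R; intro H; split; intro; mm. Qed.

Lemma Fr_i a b g : b < 0 -> g <= 0 -> Fr a b g <= 0.
Proof. rewrite Fr_R; intros; mm. Qed.
Lemma Fr_ii a b g : a > 0 -> g > 0 -> Fr a b g <= 0.
Proof. rewrite Fr_R; intros; mm. Qed.

Lemma cont_mn f g : continuity f -> continuity g -> continuity (fun s => mn (f s) (g s)).
Proof.
  intros Hf Hg. unfold mn.
  change (fun s => (f s + g s - Rabs (f s - g s)) / 2) with
    (fun s => ((fun s => f s + g s - Rabs (f s - g s)) s) * (fun _ => /2) s).
  apply continuity_mult; [| apply continuity_const; intros ?; reflexivity].
  apply continuity_minus. apply continuity_plus; auto.
  apply (continuity_comp (fun s => f s - g s) Rabs). apply continuity_minus; auto. apply Rcontinuity_abs.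
Qed.
Lemma cont_mx f g : continuity f -> continuity g -> continuity (fun s => mx (f s) (g s)).
Proof.
  intros Hf Hg. unfold mx.
  change (fun s => (f s + g s + Rabs (f s - g s)) / 2) with
    (fun s => ((fun s => f s + g s + Rabs (f s - g s)) s) * (fun _ => /2) s).
  apply continuity_mult; [| apply continuity_const; intros ?; reflexivity].
  apply continuity_plus. apply continuity_plus; auto.
  apply (continuity_comp (fun s => f s - g s) Rabs). apply continuity_minus; auto. apply Rcontinuity_abs.
Qed.
Lemma cont_aff a b : continuity (fun s => a + s * b).
Proof.
  apply continuity_plus. apply continuity_const; intros ? ?; reflexivity.
  apply continuity_mult. apply derivable_continuous, derivable_id. apply continuity_const; intros ? ?; reflexivity.
Qed.
Lemma cont_naff a b : continuity (fun s => - (a + s * b)).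
Proof. apply continuity_opp, cont_aff. Qed.

Lemma cont_Fr a0 a1 b0 b1 g0 g1 :
  continuity (fun s => Fr (a0 + s * a1) (b0 + s * b1) (g0 + s * g1)).
Proof.
  unfold Fr.
  apply cont_mx; [apply cont_mx|]; apply cont_mn; auto using cont_aff, cont_naff.
Qed.

Definition Fz (n m u z : vec) := Fr (ldot z n) (ldot z m) (ldot z u).

Lemma seg n m u c d :
  (forall s, 0 <= s <= 1 -> Fz n m u (vadd c (vscale s d)) <> 0) ->
  (Fz n m u c < 0 <-> Fz n m u (vadd c d) < 0).
Proof.
  intros Nz.
  set (f := fun s => Fr (ldot c n + s * ldot d n) (ldot c m + s * ldot d m) (ldot c u + s * ldot d u)).
  assert (Ef : forall s, Fz n m u (vadd c (vscale s d)) = f s).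
  { intro s. unfold Fz, f. rewrite !ldot_add, !ldot_scale. reflexivity. }
  assert (E0 : Fz n m u c = f 0).
  { unfold Fz, f. rewrite !Rmult_0_l, !Rplus_0_r. reflexivity. }
  assert (E1 : Fz n m u (vadd c d) = f 1).
  { unfold Fz, f. rewrite !ldot_add, !Rmult_1_l. reflexivity. }
  assert (N0 : f 0 <> 0) by (rewrite <- E0; replace c with (vadd c (vscale 0 d)) at 1 by
      (apply vec_ext; unfold vadd, vscale; simpl; ring); apply Nz; lra).
  assert (N1 : f 1 <> 0) by (rewrite <- Ef; apply Nz; lra).
  assert (Z : ~ (f 0 * f 1 <= 0)).
  { intro Hp. destruct (IVT_cor f 0 1 (cont_Fr _ _ _ _ _ _) ltac:(lra) Hp) as [z [Hz Hfz]].
    apply (Nz z Hz). rewrite Ef. exact Hfz. }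
  rewrite E0, E1. split; intro H; destruct (Rtotal_order (f 1) 0) as [|[|]];
    destruct (Rtotal_order (f 0) 0) as [|[|]]; try lra; exfalso; apply Z; nra.
Qed.

Lemma ldot_scale_r k x z : ldot x (vscale k z) = k * ldot x z.
Proof. unfold ldot, vscale; simpl; ring. Qed.

Ltac veq := apply vec_ext; unfold vadd, vsub, vscale, vopp; simpl; ring.

Definition Cp v z := Pset (vplus v) z \/ Pset (vminus v) z \/ (ldot v z = 0 /\ ldot z z <= 0).

Lemma z_perp_n v mv nv z : fr v mv nv -> ldot z nv = 0 -> ldot z v = 0 -> ldot z z = 0.
Proof.
  intros F H1 H2. rewrite (fr_ldot v mv nv z z F), H1, H2.
  pose proof (fr_k _ _ _ F). destruct (fr_facts _ _ _ F) as (Hu&_). field; lra.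
Qed.
Lemma z_perp_m v mv nv z : fr v mv nv -> ldot z mv = 0 -> ldot z v = 0 -> ldot z z = 0.
Proof.
  intros F H1 H2. rewrite (fr_ldot v mv nv z z F), H1, H2.
  pose proof (fr_k _ _ _ F). destruct (fr_facts _ _ _ F) as (Hu&_). field; lra.
Qed.

Lemma sp_of v mv nv y : fr v mv nv -> (ldot y nv = 0 \/ ldot y mv = 0) -> ldot y v <> 0 -> spacelike y.
Proof.
  intros F H Hv. pose proof (fr_k _ _ _ F). destruct (fr_facts _ _ _ F) as (Hu&_).
  unfold spacelike. rewrite (fr_ldot v mv nv y y F).
  destruct H as [H|H]; rewrite H;
  replace ((_ * _ + _ * _) / ldot mv nv + ldot y v * ldot y v / ldot v v) with
    (ldot y v * ldot y v / ldot v v) by (field; lra);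
  apply Rdiv_lt_0_compat; nra.
Qed.

Lemma mem_intro_p v y : spacelike v -> ldot y (vplus v) = 0 -> ldot y v > 0 -> Cp v y.
Proof.
  intros Hv H1 H2. pose proof (vpm_fr v Hv) as F.
  assert (Hy : spacelike y) by (apply (sp_of v (vminus v) (vplus v)); auto; lra).
  left. split; [auto|split; [auto|]].
  destruct (Kn v (vminus v) (vplus v) y (vminus y) (vplus y) F (vpm_fr y Hy) H1) as [K _].
  apply K; auto.
Qed.

Lemma mem_intro_m v y : spacelike v -> ldot y (vminus v) = 0 -> ldot y v < 0 -> Cp v y.
Proof.
  intros Hv H1 H2. pose proof (vpm_fr v Hv) as F.
  assert (Hy : spacelike y) by (apply (sp_of v (vminus v) (vplus v)); auto; lra).
  right; left. split; [auto|split; [auto|]].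
  destruct (Km v (vminus v) (vplus v) y (vminus y) (vplus y) F (vpm_fr y Hy) H1) as [K _].
  apply K; auto.
Qed.

Lemma mem_elim v y : spacelike v -> Cp v y ->
  (ldot y (vplus v) = 0 /\ ldot y v > 0) \/ (ldot y (vminus v) = 0 /\ ldot y v < 0) \/
  (ldot v y = 0 /\ ldot y y <= 0).
Proof.
  intros Hv C. pose proof (vpm_fr v Hv) as F.
  destruct C as [[Hy [H1 [c [Hc Ec]]]]|[[Hy [H1 [c [Hc Ec]]]]|S]]; [| |right; right; exact S].
  - left. split; auto.
    destruct (Rtotal_order (ldot y v) 0) as [L|[L|L]]; auto; exfalso.
    + destruct (Kn v (vminus v) (vplus v) y (vminus y) (vplus y) F (vpm_fr y Hy) H1) as [_ K].
      destruct (K L) as [c' [Hc' E']].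
      destruct (fr_facts _ _ _ (vpm_fr y Hy)) as (_&_&_&_&_&HD&_).
      rewrite E', Ec in HD. unfold det3, vscale in HD; simpl in HD. lra.
    + pose proof (z_perp_n v (vminus v) (vplus v) y F H1 L). unfold spacelike in Hy. lra.
  - right; left. split; auto.
    destruct (Rtotal_order (ldot y v) 0) as [L|[L|L]]; auto; exfalso.
    + pose proof (z_perp_m v (vminus v) (vplus v) y F H1 L). unfold spacelike in Hy. lra.
    + destruct (Km v (vminus v) (vplus v) y (vminus y) (vplus y) F (vpm_fr y Hy) H1) as [_ K].
      destruct (K L) as [c' [Hc' E']].
      destruct (fr_facts _ _ _ (vpm_fr y Hy)) as (_&_&_&_&_&HD&_).
      rewrite E', Ec in HD. unfold det3, vscale in HD; simpl in HD. lra.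
Qed.

Lemma zero_in u z : spacelike u -> Fz (vplus u) (vminus u) u z = 0 -> Cp u z.
Proof.
  intros Hu H. pose proof (vpm_fr u Hu) as F.
  unfold Fz in H. apply Fr_zero in H.
  destruct H as [[Hg Hab]|[[Hg Ha]|[Hg Hb]]].
  - right; right. split; [rewrite ldot_sym; auto|].
    rewrite (fr_ldot u (vminus u) (vplus u) z z F), Hg.
    pose proof (fr_k _ _ _ F) as Hk. destruct (fr_facts _ _ _ F) as (Huu&_).
    assert (Hi : / ldot (vminus u) (vplus u) < 0) by (apply Rinv_lt_0_compat; lra).
    unfold Rdiv. rewrite Rmult_0_l, Rmult_0_l, Rplus_0_r. nra.
  - apply mem_intro_p; auto.
  - apply mem_intro_m; auto.
Qed.

Lemma PLs n m u v w y :
  (forall y, Cp v y -> Fz n m u (vadd w y) <> 0) ->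
  ldot v y = 0 -> ldot y y <= 0 -> (Fz n m u w < 0 <-> Fz n m u (vadd w y) < 0).
Proof.
  intros Nz H1 H2. apply seg. intros s Hs. apply Nz. right; right.
  rewrite ldot_scale_r, ldot_scale, ldot_scale_r, H1. split; [ring|]. nra.
Qed.

Lemma PL n m u v w : spacelike v ->
  (forall y, Cp v y -> Fz n m u (vadd w y) <> 0) ->
  forall y, Cp v y -> (Fz n m u (vadd w y) < 0 <-> Fz n m u w < 0).
Proof.
  intros Hv Nz y C. pose proof (vpm_fr v Hv) as F.
  destruct (fr_facts _ _ _ F) as (Hvv&Hm&Hn&Hvm&Hvn&HD&Fm&Fn).
  destruct (mem_elim v y Hv C) as [[H1 H2]|[[H1 H2]|[H1 H2]]].
  3: { symmetry. apply (PLs n m u v); auto. }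
  - set (t := ldot y v / ldot v v).
    set (y0 := vsub y (vscale t v)).
    assert (Ey0 : ldot y0 v = 0) by (unfold y0, t; rewrite ldot_sub, ldot_scale; field; lra).
    assert (Ey0n : ldot y0 (vplus v) = 0) by (unfold y0; rewrite ldot_sub, ldot_scale, H1, Hvn; lra).
    assert (S0 : Fz n m u w < 0 <-> Fz n m u (vadd w y0) < 0).
    { apply (PLs n m u v); auto. rewrite ldot_sym; auto.
      rewrite (z_perp_n v (vminus v) (vplus v) y0 F Ey0n Ey0); lra. }
    assert (S1 : Fz n m u (vadd w y) < 0 <-> Fz n m u (vadd (vadd w y) (vscale (-t) v)) < 0).
    { apply seg. intros s Hs.
      replace (vadd (vadd w y) (vscale s (vscale (- t) v))) with (vadd w (vsub y (vscale (s*t) v))) by veq.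
      apply Nz.
      assert (A1 : ldot (vsub y (vscale (s * t) v)) (vplus v) = 0)
        by (rewrite ldot_sub, ldot_scale, H1, Hvn; lra).
      assert (A2 : ldot (vsub y (vscale (s * t) v)) v = (1 - s) * ldot y v)
        by (rewrite ldot_sub, ldot_scale; unfold t; field; lra).
      destruct (Req_dec s 1) as [E|E].
      - right; right. split.
        + rewrite ldot_sym, A2, E; ring.
        + rewrite (z_perp_n v (vminus v) (vplus v) _ F A1); [lra|]. rewrite A2, E; ring.
      - apply mem_intro_p; auto. rewrite A2. apply Rmult_lt_0_compat; lra. }
    replace (vadd (vadd w y) (vscale (- t) v)) with (vadd w y0) in S1 by (unfold y0; veq).
    tauto.
  - set (t := ldot y v / ldot v v).
    set (y0 := vsub y (vscale t v)).
    assert (Ey0 : ldot y0 v = 0) by (unfold y0, t; rewrite ldot_sub, ldot_scale; field; lra).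
    assert (Ey0n : ldot y0 (vminus v) = 0) by (unfold y0; rewrite ldot_sub, ldot_scale, H1, Hvm; lra).
    assert (S0 : Fz n m u w < 0 <-> Fz n m u (vadd w y0) < 0).
    { apply (PLs n m u v); auto. rewrite ldot_sym; auto.
      rewrite (z_perp_m v (vminus v) (vplus v) y0 F Ey0n Ey0); lra. }
    assert (S1 : Fz n m u (vadd w y) < 0 <-> Fz n m u (vadd (vadd w y) (vscale (-t) v)) < 0).
    { apply seg. intros s Hs.
      replace (vadd (vadd w y) (vscale s (vscale (- t) v))) with (vadd w (vsub y (vscale (s*t) v))) by veq.
      apply Nz.
      assert (A1 : ldot (vsub y (vscale (s * t) v)) (vminus v) = 0)
        by (rewrite ldot_sub, ldot_scale, H1, Hvm; lra).
      assert (A2 : ldot (vsub y (vscale (s * t) v)) v = (1 - s) * ldot y v)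
        by (rewrite ldot_sub, ldot_scale; unfold t; field; lra).
      destruct (Req_dec s 1) as [E|E].
      - right; right. split.
        + rewrite ldot_sym, A2, E; ring.
        + rewrite (z_perp_m v (vminus v) (vplus v) _ F A1); [lra|]. rewrite A2, E; ring.
      - apply mem_intro_m; auto. rewrite A2.
        assert (0 < 1 - s) by lra. nra. }
    replace (vadd (vadd w y) (vscale (- t) v)) with (vadd w y0) in S1 by (unfold y0; veq).
    tauto.
Qed.

Lemma big x0 x1 y0 y1 : x1 < 0 -> y1 < 0 -> exists s, s > 0 /\ x0 + s * x1 < 0 /\ y0 + s * y1 < 0.
Proof.
  intros H1 H2. exists (1 + Rabs x0 / (- x1) + Rabs y0 / (- y1)).
  assert (A1 : Rabs x0 / (- x1) >= 0) by (apply Rle_ge; unfold Rdiv; apply Rmult_le_pos; [apply Rabs_pos|left; apply Rinv_0_lt_compat; lra]).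
  assert (A2 : Rabs y0 / (- y1) >= 0) by (apply Rle_ge; unfold Rdiv; apply Rmult_le_pos; [apply Rabs_pos|left; apply Rinv_0_lt_compat; lra]).
  assert (B1 : Rabs x0 / (- x1) * x1 = - Rabs x0) by (field; lra).
  assert (B2 : Rabs y0 / (- y1) * y1 = - Rabs y0) by (field; lra).
  pose proof (Rle_abs x0). pose proof (Rle_abs y0).
  split; [lra|split; nra].
Qed.

Lemma ldot_opp_r x z : ldot x (vopp z) = - ldot x z.
Proof. unfold ldot, vopp; simpl; ring. Qed.

Theorem lemma4p2 (u v p w : vec) :
  consistently_oriented2 u v ->
  (forall q, ~ (crooked_plane u p q /\ crooked_plane v (vadd p w) q)) ->
  forall q, crooked_plane v (vadd p w) q -> crooked_halfspace (vopp u) p q.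
Proof.
  intros [Hu [Hv [Huv [H1 [H2 [H3 H4]]]]]] Disj q Cq.
  pose proof (vpm_fr u Hu) as Fu. pose proof (vpm_fr v Hv) as Fv.
  set (n := vplus u) in *. set (m := vminus u) in *.
  destruct (fr_facts _ _ _ Fu) as (Huu&Hm&Hn&Hum&Hun&HD&Fm&Fn).
  destruct (fr_facts _ _ _ Fv) as (Hvv&Hmv&Hnv&Hvmv&Hvnv&HDv&Fmv&Fnv).
  pose proof (fr_k _ _ _ Fu) as Hk.
  assert (Nz : forall y, Cp v y -> Fz n m u (vadd w y) <> 0).
  { intros y Cy Z. apply (Disj (vadd (vadd p w) y)). split.
    - unfold crooked_plane. replace (vsub (vadd (vadd p w) y) p) with (vadd w y) by veq.
      exact (zero_in u _ Hu Z).
    - unfold crooked_plane. replace (vsub (vadd (vadd p w) y) (vadd p w)) with y by veq. exact Cy. }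
  assert (St : exists y, Cp v y /\ Fz n m u (vadd w y) <= 0).
  { unfold Fz.
    destruct (Rlt_dec (ldot v m) 0) as [L1|L1].
    { destruct (big (ldot w m) (ldot v m) (ldot w u) (ldot v u) L1 ltac:(rewrite ldot_sym; lra)) as [s [Hs [B1 B2]]].
      exists (vscale s v). split.
      - apply mem_intro_p; auto; rewrite ldot_scale; [rewrite Hvnv; ring|nra].
      - rewrite !ldot_add, !ldot_scale. apply Fr_i; lra. }
    destruct (Rlt_dec (ldot v n) 0) as [L2|L2].
    { destruct (big (- ldot w n) (ldot v n) (- ldot w u) (ldot v u) L2 ltac:(rewrite ldot_sym; lra)) as [s [Hs [B1 B2]]].
      exists (vscale (-s) v). split.
      - apply mem_intro_m; auto; rewrite ldot_scale; [rewrite Hvmv; ring|nra].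
      - rewrite !ldot_add, !ldot_scale. apply Fr_ii; lra. }
    assert (E1 : ldot v m = 0) by lra. assert (E2 : ldot v n = 0) by lra.
    assert (Hnu : ldot n u = 0) by (rewrite ldot_sym; auto).
    assert (Hmu : ldot m u = 0) by (rewrite ldot_sym; auto).
    destruct (Rle_dec (ldot w u) 0) as [L3|L3].
    - destruct (big (ldot w m) (ldot n m) 0 (ldot n m) ltac:(rewrite ldot_sym; lra) ltac:(rewrite ldot_sym; lra)) as [s [Hs [B1 B2]]].
      exists (vscale s n). split.
      + right; right. rewrite ldot_scale_r, ldot_scale, ldot_scale_r, E2, Hn. split; [ring|rewrite !Rmult_0_r; lra].
      + rewrite !ldot_add, !ldot_scale, Hnu. apply Fr_i; lra.
    - destruct (big (- ldot w n) (ldot m n) 0 (ldot m n) Hk Hk) as [s [Hs [B1 B2]]].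
      exists (vscale (-s) m). split.
      + right; right. rewrite ldot_scale_r, ldot_scale, ldot_scale_r, E1, Hm. split; [ring|rewrite !Rmult_0_r; lra].
      + rewrite !ldot_add, !ldot_scale, Hmu. apply Fr_ii; lra. }
  destruct St as [y1 [Cy1 Fy1]].
  assert (Fw : Fz n m u w < 0).
  { apply (PL n m u v w Hv Nz y1 Cy1). pose proof (Nz y1 Cy1). lra. }
  set (y := vsub q (vadd p w)).
  assert (Cy : Cp v y) by exact Cq.
  assert (Fx : Fz n m u (vadd w y) < 0) by (apply (PL n m u v w Hv Nz y Cy); exact Fw).
  replace (vadd w y) with (vsub q p) in Fx by (unfold y; veq).
  set (x := vsub q p) in *.
  unfold Fz in Fx. apply Fr_neg in Fx. destruct Fx as [G1 G2].
  assert (Hsu : spacelike (vopp u)) by (unfold spacelike in *; unfold ldot, vopp in *; simpl; lra).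
  pose proof (vpm_fr (vopp u) Hsu) as Fo.
  assert (Hou : ldot (vopp u) u < 0) by (rewrite ldot_opp; lra).
  destruct (Km u m n (vopp u) _ _ Fu Fo ltac:(rewrite ldot_opp, Hum; ring)) as [K1 _].
  destruct (Kn u m n (vopp u) _ _ Fu Fo ltac:(rewrite ldot_opp, Hun; ring)) as [_ K2].
  destruct (K1 Hou) as [c [Hc Ec]]. destruct (K2 Hou) as [c' [Hc' Ec']].
  unfold crooked_halfspace. fold x. rewrite Ec, Ec', !ldot_scale_r, ldot_opp_r.
  split; intro HH.
  - assert (ldot x m < 0) by (apply G1; lra). nra.
  - assert (ldot x n > 0) by (apply G2; lra). nra.
Qed.
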